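(* Let $\lambda>0$, let $\boldsymbol\alpha^\star$ be the optimal solution of the dual problem $\max_{\boldsymbol\alpha\ge\mathbf0}D_\lambda(\boldsymbol\alpha)$ and $\mathbf m^\star$ the optimal solution of the primal problem $\min_{\mathbf m\ge\mathbf0}P_\lambda(\mathbf m)$. Suppose $\mathbf q\in\mathbb R^{2nK}_{\ge0}$ and $r\ge0$ satisfy $\|\boldsymbol\alpha^\star-\mathbf q\|_2^2\le r^2$. For $k\in[p]$ let $$\mathrm{Prune}(k\mid\mathbf q,r)=\sum_{i\in[n]}\sum_{l\in\mathcal D_i}q_{il}\max\{x_{i,k},x_{l,k}\}^2+r\sqrt{\sum_{i\in[n]}\Big[\sum_{l\in\mathcal D_i}\max\{x_{i,k},x_{l,k}\}^4+\sum_{j\in\mathcal S_i}\max\{x_{i,k},x_{j,k}\}^4\Big]}.$$ If $\mathrm{Prune}(k\mid\mathbf q,r)\le\lambda$, then $m^\star_{k'}=0$ for every descendant $k'\supseteq k$.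
   Context: Let $n,K,p\ge1$ be integers, $[n]=\{1,\dots,n\}$. For each $i\in[n]$ let $\mathbf x_i=(x_{i,1},\dots,x_{i,p})^\top\in\mathbb R^p$ have nonnegative entries and let $\mathcal D_i,\mathcal S_i\subseteq[n]$ be sets of size $K$. Put $\mathbf c_{ij}=(\mathbf x_i-\mathbf x_j)\circ(\mathbf x_i-\mathbf x_j)$ (entrywise product). Vectors in $\mathbb R^{2nK}$ are indexed by the pairs $(i,l)$, $l\in\mathcal D_i$ (''different-class pairs'') and $(i,j)$, $j\in\mathcal S_i$ (''same-class pairs''); $\mathbf q$ has entries $q_{il},q_{ij}$. $\mathbf C\in\mathbb R^{p\times2nK}$ has column $\mathbf c_{il}$ for each different-class pair and $-\mathbf c_{ij}$ for each same-class pair. Fix $L\ge U\ge0$, $\eta>0$; let $\mathbf t\in\mathbb R^{2nK}$ have entry $L$ at different-class pairs and $-U$ at same-class pairs; $\ell_s(x)=([s-x]_+)^2$ with $[z]_+=\max\{z,0\}$ (entrywise for vectors); $\mathbf1$ is the all-ones vector. For $\lambda>0$, $$P_\lambda(\mathbf m)=\sum_{i\in[n]}\Big[\sum_{l\in\mathcal D_i}\ell_L(\mathbf m^\top\mathbf c_{il})+\sum_{j\in\mathcal S_i}\ell_{-U}(-\mathbf m^\top\mathbf c_{ij})\Big]+\lambda\Big(\mathbf m^\top\mathbf1+\frac\eta2\|\mathbf m\|_2^2\Big)\ (\mathbf m\in\mathbb R^p_{\ge0}),$$ $$D_\lambda(\boldsymbol\alpha)=-\frac14\|\boldsymbol\alpha\|_2^2+\mathbf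 t^\top\boldsymbol\alpha-\frac{\lambda\eta}2\Big\|\frac1{\lambda\eta}[\mathbf C\boldsymbol\alpha-\lambda\mathbf1]_+\Big\|_2^2\ (\boldsymbol\alpha\in\mathbb R^{2nK}_{\ge0}).$$ The feature indices $[p]$ are nodes of a rooted graph-mining tree: $x_{i,k}=g(\#(H_k\sqsubseteq G_i))$, where $H_k$ is the subgraph at node $k$, $G_i$ the $i$-th input graph, $\#(H\sqsubseteq G)$ the number of non-overlapping occurrences of $H$ in $G$, $g$ nonnegative and nondecreasing, and each node's subgraph is contained in its children's subgraphs. Write $k'\supseteq k$ if $k'$ is a descendant of $k$; in particular $0\le x_{i,k'}\le x_{i,k}$ for all $i$ whenever $k'\supseteq k$. *)

(* Defs.v *)
From HB Require Import structures.
From mathcomp Require Import all_boot all_order all_algebra.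
From mathcomp Require Import reals.
Set Implicit Arguments. Unset Strict Implicit. Unset Printing Implicit Defensive.
Import Order.TTheory GRing.Theory Num.Theory.
Local Open Scope ring_scope.

Section Defs.
Variables (R : realType) (n p : nat).
Variable x : 'I_n -> 'I_p -> R.
(* D i = different-class set D_i, S i = same-class set S_i *)
Variables (D S : 'I_n -> {set 'I_n}).

Definition pospart (z : R) : R := Num.max z 0.
Definition hinge2 (s z : R) : R := (pospart (s - z)) ^+ 2.

Definition cvec (i j : 'I_n) (k : 'I_p) : R := (x i k - x j k) ^+ 2.

Definition mc (m : 'I_p -> R) (i j : 'I_n) : R := \sum_(k < p) m k * cvec i j k.

Definition Pobj (L U lam eta : R) (m : 'I_p -> R) : R :=
  \sum_(i < n) (\sum_(l in D i) hinge2 L (mc m i l)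
              + \sum_(j in S i) hinge2 (- U) (- mc m i j))
  + lam * (\sum_(k < p) m k + eta / 2 * \sum_(k < p) m k ^+ 2).

(* A vector alpha in R^{2nK}, indexed by the pairs (i,l), l in D_i and
   (i,j), j in S_i, is represented by two functions aD aS : 'I_n -> 'I_n -> R,
   of which only the entries aD i l (l \in D i) and aS i j (j \in S i) matter. *)
Definition vnorm2 (aD aS : 'I_n -> 'I_n -> R) : R :=
  \sum_(i < n) (\sum_(l in D i) aD i l ^+ 2 + \sum_(j in S i) aS i j ^+ 2).

Definition vnonneg (aD aS : 'I_n -> 'I_n -> R) : Prop :=
  forall i, (forall l, l \in D i -> 0 <= aD i l) /\ (forall j, j \in S i -> 0 <= aS i j).

Definition Calpha (aD aS : 'I_n -> 'I_n -> R) (k : 'I_p) : R :=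
  \sum_(i < n) (\sum_(l in D i) aD i l * cvec i l k
              - \sum_(j in S i) aS i j * cvec i j k).

Definition talpha (L U : R) (aD aS : 'I_n -> 'I_n -> R) : R :=
  \sum_(i < n) (\sum_(l in D i) L * aD i l + \sum_(j in S i) (- U) * aS i j).

Definition Dobj (L U lam eta : R) (aD aS : 'I_n -> 'I_n -> R) : R :=
  - (1 / 4) * vnorm2 aD aS + talpha L U aD aS
  - lam * eta / 2 * \sum_(k < p) ((lam * eta)^-1 * pospart (Calpha aD aS k - lam)) ^+ 2.

Definition Prune (qD : 'I_n -> 'I_n -> R) (r : R) (k : 'I_p) : R :=
  \sum_(i < n) \sum_(l in D i) qD i l * (Num.max (x i k) (x l k)) ^+ 2
  + r * Num.sqrt (\sum_(i < n) (\sum_(l in D i) (Num.max (x i k) (x l k)) ^+ 4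
                               + \sum_(j in S i) (Num.max (x i k) (x j k)) ^+ 4)).
End Defs.

(* Main.v *)
Require Import Defs.
From HB Require Import structures.
From mathcomp Require Import all_boot all_order all_algebra.
From mathcomp Require Import reals ring lra.
Import Order.TTheory GRing.Theory Num.Theory.
Local Open Scope ring_scope.
Set Implicit Arguments. Unset Strict Implicit.

Section Aux.
Variable R : realType.

Lemma pos_cases (u : R) : (u <= 0 /\ pospart u = 0) \/ (0 <= u /\ pospart u = u).
Proof.
rewrite /pospart; case: (leP u 0) => h.
  by left; split.
by right; split => //; exact: ltW.
Qed.

Lemma pos_ge0 (u : R) : 0 <= pospart u.
Proof. by case: (pos_cases u) => -[h ->]. Qed.

Lemma gap_ge0 (u a : R) : 0 <= a -> 0 <= pospart u ^+ 2 - a * u + a ^+ 2 / 4.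
Proof.
move=> ha; have := sqr_ge0 (u - a / 2); have := mulr_ge0 ha (sqr_ge0 a).
by case: (pos_cases u) => -[h ->]; nra.
Qed.

Lemma gap_le (u u0 : R) :
  pospart u ^+ 2 - (2 * pospart u0) * u + (2 * pospart u0) ^+ 2 / 4 <= (u - u0) ^+ 2.
Proof.
have := sqr_ge0 u; have := sqr_ge0 (u - u0).
case: (pos_cases u) => -[h ->]; case: (pos_cases u0) => -[h0 ->]; nra.
Qed.

Lemma gap_eq0 (u : R) :
  pospart u ^+ 2 - (2 * pospart u) * u + (2 * pospart u) ^+ 2 / 4 = 0.
Proof. by case: (pos_cases u) => -[h ->]; field. Qed.

Lemma sumlin (I : finType) (P : pred I) (f g h k : I -> R) a b c d :
  \sum_(i | P i) (a * f i - b * g i + c * h i + d * k i) =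
  a * \sum_(i | P i) f i - b * \sum_(i | P i) g i + c * \sum_(i | P i) h i
  + d * \sum_(i | P i) k i.
Proof. by rewrite !big_split /= sumrN !mulr_sumr. Qed.

Lemma uv_le (t u v : R) : 0 < t -> u * v <= (t * u ^+ 2 + t^-1 * v ^+ 2) / 2.
Proof.
move=> ht.
have -> : (t * u ^+ 2 + t^-1 * v ^+ 2) / 2 = u * v + (t * u - v) ^+ 2 / (2 * t).
  by field; rewrite gt_eqF.
rewrite lerDl; apply: divr_ge0; [exact: sqr_ge0 | nra].
Qed.

Lemma final_real (A N W r : R) :
  (forall t, 0 < t -> A <= (t * N + t^-1 * W) / 2) ->
  0 <= N -> N <= r ^+ 2 -> 0 <= r -> 0 <= W -> A <= r * Num.sqrt W.
Proof.
move=> H hN hNr hr hW.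
set s := Num.sqrt W.
have hs : 0 <= s by exact: sqrtr_ge0.
have hW' : W = s ^+ 2 by rewrite sqr_sqrtr.
case: (ltP 0 r) => hr0; case: (ltP 0 s) => hs0.
- have := H (s / r); rewrite divr_gt0 // => /(_ isT) hA.
  apply: (le_trans hA).
  have -> : (s / r * N + (s / r)^-1 * W) / 2 = (s * (N / r) + r * s) / 2.
    rewrite hW' invf_div; field; rewrite ?gt_eqF //.
  have : N / r <= r.
    rewrite ler_pdivrMr //; nra.
  nra.
- have s0 : s = 0 by apply/le_anti; rewrite hs0 hs.
  rewrite s0 mulr0; rewrite s0 expr0n /= in hW'.
  case: (leP A 0) => // hA.
  have := H (A / (N + 1)); rewrite divr_gt0 //; last by lra.
  move=> /(_ isT); rewrite hW' mulr0 addr0.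
  have -> : A / (N + 1) * N / 2 = A * (N / (N + 1)) / 2 by field; lra.
  have : N / (N + 1) < 1 by rewrite ltr_pdivrMr; lra.
  nra.
- have r0 : r = 0 by apply/le_anti; rewrite hr0 hr.
  rewrite r0 mul0r; rewrite r0 expr0n /= in hNr.
  have N0 : N = 0 by apply/le_anti; rewrite hN hNr.
  case: (leP A 0) => // hA.
  have := H ((W + 1) / A); rewrite divr_gt0 //; last by lra.
  move=> /(_ isT); rewrite N0 mulr0 add0r invf_div.
  have -> : A / (W + 1) * W / 2 = A * (W / (W + 1)) / 2 by field; lra.
  have : W / (W + 1) < 1 by rewrite ltr_pdivrMr; lra.
  nra.
- have r0 : r = 0 by apply/le_anti; rewrite hr0 hr.
  rewrite r0 mul0r; rewrite r0 expr0n /= in hNr.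
  have N0 : N = 0 by apply/le_anti; rewrite hN hNr.
  case: (leP A 0) => // hA.
  have := H ((W + 1) / A); rewrite divr_gt0 //; last by lra.
  move=> /(_ isT); rewrite N0 mulr0 add0r invf_div.
  have -> : A / (W + 1) * W / 2 = A * (W / (W + 1)) / 2 by field; lra.
  have : W / (W + 1) < 1 by rewrite ltr_pdivrMr; lra.
  nra.
Qed.

End Aux.

Section Main.
Variables (R : realType) (n p : nat) (x : 'I_n -> 'I_p -> R).
Variables (D S : 'I_n -> {set 'I_n}) (L U lam eta : R).

Definition gapD (z a : R) := pospart (L - z) ^+ 2 - a * (L - z) + a ^+ 2 / 4.
Definition gapS (z a : R) := pospart (z - U) ^+ 2 - a * (z - U) + a ^+ 2 / 4.
Definition cgap (mk s : R) := lam * eta / 2 * mk ^+ 2 - mk * s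
   + lam * eta / 2 * ((lam * eta)^-1 * pospart s) ^+ 2.

Lemma hingeS z : hinge2 (- U) (- z) = pospart (z - U) ^+ 2.
Proof. by rewrite /hinge2; have -> : - U - - z = z - U by ring. Qed.

Lemma E3 (m : 'I_p -> R) aD aS :
  \sum_(k < p) m k * Calpha x D S aD aS k =
  \sum_(i < n) (\sum_(l in D i) aD i l * mc x m i l - \sum_(j in S i) aS i j * mc x m i j).
Proof.
rewrite /Calpha /mc.
under eq_bigr => k _ do rewrite mulr_sumr.
rewrite exchange_big /=; apply: eq_bigr => i _.
under eq_bigr => k _ do rewrite mulrBr !mulr_sumr.
rewrite sumrB exchange_big [X in _ - X]exchange_big /=.
congr (_ - _); apply: eq_bigr => l _; rewrite mulr_sumr; apply: eq_bigr => k _; ring.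
Qed.

Lemma identity (m : 'I_p -> R) aD aS :
  Pobj x D S L U lam eta m = Dobj x D S L U lam eta aD aS
  + \sum_(i < n) (\sum_(l in D i) gapD (mc x m i l) (aD i l)
                + \sum_(j in S i) gapS (mc x m i j) (aS i j))
  + \sum_(k < p) cgap (m k) (Calpha x D S aD aS k - lam).
Proof.
have E1 : \sum_(i < n) (\sum_(l in D i) gapD (mc x m i l) (aD i l)
                + \sum_(j in S i) gapS (mc x m i j) (aS i j)) =
  1 * \sum_(i < n) (\sum_(l in D i) hinge2 L (mc x m i l)
              + \sum_(j in S i) hinge2 (- U) (- mc x m i j))
  - 1 * talpha D S L U aD aS + 1 / 4 * vnorm2 D S aD aS
  + 1 * \sum_(i < n) (\sum_(l in D i) aD i l * mc x m i l
                      - \sum_(j in S i) aS i j * mc x m i j).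
  rewrite /talpha /vnorm2 -sumlin; apply: eq_bigr => i _.
  have -> : \sum_(l in D i) gapD (mc x m i l) (aD i l) =
     1 * \sum_(l in D i) hinge2 L (mc x m i l) - 1 * \sum_(l in D i) (L * aD i l)
     + 1 / 4 * \sum_(l in D i) aD i l ^+ 2 + 1 * \sum_(l in D i) (aD i l * mc x m i l).
    by rewrite -sumlin; apply: eq_bigr => l _; rewrite /gapD /hinge2; field.
  have -> : \sum_(j in S i) gapS (mc x m i j) (aS i j) =
     1 * \sum_(j in S i) hinge2 (- U) (- mc x m i j) - 1 * \sum_(j in S i) (- U * aS i j)
     + 1 / 4 * \sum_(j in S i) aS i j ^+ 2 + (-1) * \sum_(j in S i) (aS i j * mc x m i j).
    by rewrite -sumlin; apply: eq_bigr => j _; rewrite /gapS hingeS; field.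
  ring.
have E2 : \sum_(k < p) cgap (m k) (Calpha x D S aD aS k - lam) =
  lam * eta / 2 * \sum_(k < p) m k ^+ 2 - 1 * \sum_(k < p) m k * Calpha x D S aD aS k
  + lam * \sum_(k < p) m k
  + lam * eta / 2 * \sum_(k < p) ((lam * eta)^-1 * pospart (Calpha x D S aD aS k - lam)) ^+ 2.
  by rewrite -sumlin; apply: eq_bigr => k _; rewrite /cgap; ring.
rewrite E1 E2 E3 /Pobj /Dobj; ring.
Qed.

End Main.

Section Main2.
Variables (R : realType) (n p : nat) (x : 'I_n -> 'I_p -> R).
Variables (D S : 'I_n -> {set 'I_n}) (L U lam eta : R).
Hypotheses (hlam : 0 < lam) (heta : 0 < eta).

Lemma cgap_pos mk s : 0 <= s ->
  cgap lam eta mk s = lam * eta / 2 * (mk - (lam * eta)^-1 * s) ^+ 2.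
Proof.
move=> hs; rewrite /cgap.
have [[h ->]|[h ->]] := pos_cases s.
  have -> : s = 0 by apply/le_anti; rewrite h hs.
  ring.
by field; rewrite !gt_eqF.
Qed.

Lemma cgap_neg mk s : s <= 0 ->
  cgap lam eta mk s = lam * eta / 2 * mk ^+ 2 - mk * s.
Proof.
move=> hs; rewrite /cgap.
have [[h ->]|[h ->]] := pos_cases s.
  ring.
have -> : s = 0 by apply/le_anti; rewrite h hs.
ring.
Qed.

Lemma c_gt0 : 0 < lam * eta / 2.
Proof. by rewrite divr_gt0 // mulr_gt0. Qed.

Lemma cgap_ge0 mk s : 0 <= mk -> 0 <= cgap lam eta mk s.
Proof.
move=> hm; have hc := c_gt0.
case: (leP s 0) => hs.
  rewrite cgap_neg //.
  have h1 : 0 <= mk * - s by apply: mulr_ge0; lra.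
  have h2 := mulr_ge0 (ltW hc) (sqr_ge0 mk); nra.
rewrite cgap_pos; last exact: ltW.
by apply: mulr_ge0; [exact: ltW | exact: sqr_ge0].
Qed.

Lemma cgap_zero mk s : 0 <= mk -> s <= 0 -> cgap lam eta mk s = 0 -> mk = 0.
Proof.
move=> hm hs; have hc := c_gt0; rewrite cgap_neg // => h.
have h1 : 0 <= mk * - s by apply: mulr_ge0; lra.
have h2 : lam * eta / 2 * mk ^+ 2 <= 0 by nra.
have h3 : mk ^+ 2 <= 0.
  by rewrite -(pmulr_rle0 _ hc).
apply/le_anti; rewrite hm andbT; nra.
Qed.


Lemma cgap_conv mk s t : 0 <= mk -> 0 <= t -> t <= 1 ->
  cgap lam eta (mk + t * ((lam * eta)^-1 * pospart s - mk)) s <= (1 - t) * cgap lam eta mk s.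
Proof.
move=> hm ht0 ht1; have hc := c_gt0.
case: (leP s 0) => hs.
  have [[_ ->]|[h ->]] := pos_cases s; last first.
    have -> : s = 0 by apply/le_anti; rewrite h hs.
    rewrite (_ : mk + t * ((lam * eta)^-1 * 0 - mk) = (1 - t) * mk); last by ring.
    rewrite !cgap_neg //.
    have h1 : 0 <= mk * - s by apply: mulr_ge0; lra.
    have h2 := mulr_ge0 (ltW hc) (sqr_ge0 mk).
    have h3 : 0 <= t * (1 - t) by apply: mulr_ge0; lra.
    have h4 := mulr_ge0 h3 h2.
    nra.
  rewrite (_ : mk + t * ((lam * eta)^-1 * 0 - mk) = (1 - t) * mk); last by ring.
  rewrite !cgap_neg //.
  have h1 : 0 <= mk * - s by apply: mulr_ge0; lra.
  have h2 := mulr_ge0 (ltW hc) (sqr_ge0 mk).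
  have h3 : 0 <= t * (1 - t) by apply: mulr_ge0; lra.
  have h4 := mulr_ge0 h3 h2.
  nra.
have [[h _]|[_ ->]] := pos_cases s; first by lra.
rewrite !cgap_pos; try exact: ltW.
set w := (lam * eta)^-1 * s.
have h2 := mulr_ge0 (ltW hc) (sqr_ge0 (mk - w)).
have h3 : 0 <= t * (1 - t) by apply: mulr_ge0; lra.
have h4 := mulr_ge0 h3 h2.
have -> : lam * eta / 2 * (mk + t * (w - mk) - w) ^+ 2 =
   (1 - t) ^+ 2 * (lam * eta / 2 * (mk - w) ^+ 2) by ring.
nra.
Qed.

Lemma mc_lin (m w : 'I_p -> R) t i j :
  mc x (fun k => m k + t * (w k - m k)) i j = mc x m i j + t * (mc x w i j - mc x m i j).
Proof.
rewrite /mc -sumrB mulr_sumr -big_split /=; apply: eq_bigr => k _; ring.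
Qed.

Lemma gapD_le z z0 : gapD L z (2 * pospart (L - z0)) <= (z - z0) ^+ 2.
Proof.
rewrite /gapD; have := gap_le (L - z) (L - z0).
have -> : L - z - (L - z0) = - (z - z0) by ring.
by rewrite sqrrN.
Qed.

Lemma gapS_le z z0 : gapS U z (2 * pospart (z0 - U)) <= (z - z0) ^+ 2.
Proof.
rewrite /gapS; have := gap_le (z - U) (z0 - U).
have -> : z - U - (z0 - U) = z - z0 by ring.
by [].
Qed.

Lemma gapD_eq0 z : gapD L z (2 * pospart (L - z)) = 0.
Proof. exact: gap_eq0. Qed.

Lemma gapS_eq0 z : gapS U z (2 * pospart (z - U)) = 0.
Proof. exact: gap_eq0. Qed.

Lemma gapD_ge0 z a : 0 <= a -> 0 <= gapD L z a.
Proof. exact: gap_ge0. Qed.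

Lemma gapS_ge0 z a : 0 <= a -> 0 <= gapS U z a.
Proof. exact: gap_ge0. Qed.

Lemma diff_le (a b A B : R) : 0 <= a -> 0 <= b -> a <= A -> b <= B ->
  (a - b) ^+ 2 <= Num.max A B ^+ 2.
Proof.
move=> ha hb hA hB.
have hA' : a <= Num.max A B by rewrite le_max hA.
have hB' : b <= Num.max A B by rewrite le_max hB orbT.
nra.
Qed.

End Main2.

Section Main3.
Variables (R : realType) (n p : nat) (x : 'I_n -> 'I_p -> R).
Variables (D S : 'I_n -> {set 'I_n}).

Lemma Calpha_le aD aS qD qS r k k' :
 (forall i k0, 0 <= x i k0) -> (forall i, x i k' <= x i k) -> vnonneg D S aD aS -> 0 <= r ->
 vnorm2 D S (fun i j => aD i j - qD i j) (fun i j => aS i j - qS i j) <= r ^+ 2 ->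
 Calpha x D S aD aS k' <= Prune x D S qD r k.
Proof.
move=> hx hk ha hr hN.
have step1 : Calpha x D S aD aS k' <=
    \sum_(i < n) \sum_(l in D i) aD i l * Num.max (x i k) (x l k) ^+ 2.
  rewrite /Calpha; apply: ler_sum => i _.
  have h1 : \sum_(l in D i) aD i l * cvec x i l k' <=
            \sum_(l in D i) aD i l * Num.max (x i k) (x l k) ^+ 2.
    apply: ler_sum => l hl; apply: ler_wpM2l; first by case: (ha i) => h _; exact: h.
    exact: diff_le.
  have h2 : 0 <= \sum_(j in S i) aS i j * cvec x i j k'.
    apply: sumr_ge0 => j hj; apply: mulr_ge0; last exact: sqr_ge0.
    by case: (ha i) => _ h; exact: h.
  lra.
have step2 : \sum_(i < n) \sum_(l in D i) aD i l * Num.max (x i k) (x l k) ^+ 2 =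
   \sum_(i < n) \sum_(l in D i) qD i l * Num.max (x i k) (x l k) ^+ 2 +
   \sum_(i < n) \sum_(l in D i) (aD i l - qD i l) * Num.max (x i k) (x l k) ^+ 2.
  rewrite -big_split /=; apply: eq_bigr => i _; rewrite -big_split /=; apply: eq_bigr => l _; ring.
set N := vnorm2 D S (fun i j => aD i j - qD i j) (fun i j => aS i j - qS i j).
set W := \sum_(i < n) (\sum_(l in D i) Num.max (x i k) (x l k) ^+ 4
                      + \sum_(j in S i) Num.max (x i k) (x j k) ^+ 4).
have hN0 : 0 <= N.
  by apply: sumr_ge0 => i _; apply: addr_ge0; apply: sumr_ge0 => j _; exact: sqr_ge0.
have hW0 : 0 <= W.
  apply: sumr_ge0 => i _; apply: addr_ge0; apply: sumr_ge0 => j _;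
  by apply: exprn_ge0; rewrite le_max (hx i k).
have step3 : forall t, 0 < t ->
   \sum_(i < n) \sum_(l in D i) (aD i l - qD i l) * Num.max (x i k) (x l k) ^+ 2
   <= (t * N + t^-1 * W) / 2.
  move=> t ht.
  rewrite /N /W /vnorm2 !mulr_sumr -big_split /= mulr_suml.
  apply: ler_sum => i _.
  have h1 : \sum_(l in D i) (aD i l - qD i l) * Num.max (x i k) (x l k) ^+ 2 <=
     (t * \sum_(l in D i) (aD i l - qD i l) ^+ 2
      + t^-1 * \sum_(l in D i) Num.max (x i k) (x l k) ^+ 4) / 2.
    rewrite !mulr_sumr -big_split /= mulr_suml; apply: ler_sum => l _.
    have := uv_le (aD i l - qD i l) (Num.max (x i k) (x l k) ^+ 2) ht.
    by rewrite -exprM.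
  have h2 : 0 <= \sum_(j in S i) (aS i j - qS i j) ^+ 2.
    by apply: sumr_ge0 => j _; exact: sqr_ge0.
  have h3 : 0 <= \sum_(j in S i) Num.max (x i k) (x j k) ^+ 4.
    by apply: sumr_ge0 => j _; apply: exprn_ge0; rewrite le_max (hx i k).
  have h4 := mulr_ge0 (ltW ht) h2.
  have ht' : 0 < t^-1 by rewrite invr_gt0.
  have h5 := mulr_ge0 (ltW ht') h3.
  nra.
have step4 := final_real step3 hN0 hN hr hW0.
rewrite /Prune -/W.
lra.
Qed.

End Main3.
Unset Implicit Arguments.

Lemma eqle (R : realType) (a b : R) : a = b -> a <= b.
Proof. by move->. Qed.

Theorem theorem5 (R : realType) (n K p : nat)
    (x : 'I_n -> 'I_p -> R) (D S : 'I_n -> {set 'I_n})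
    (desc : 'I_p -> 'I_p -> Prop)
    (L U eta lam r : R)
    (mstar : 'I_p -> R) (aDstar aSstar qD qS : 'I_n -> 'I_n -> R)
    (k : 'I_p) :
  (0 < n)%N -> (0 < K)%N -> (0 < p)%N ->
  (forall i, #|D i| = K) -> (forall i, #|S i| = K) ->
  (forall i k0, 0 <= x i k0) ->
  (* the graph-mining tree: descendants carry smaller feature values *)
  (forall k1 k2, desc k1 k2 -> forall i, x i k2 <= x i k1) ->
  0 <= U -> U <= L -> 0 < eta -> 0 < lam ->
  (* m* is an optimal solution of the primal problem *)
  (forall k0, 0 <= mstar k0) ->
  (forall m : 'I_p -> R, (forall k0, 0 <= m k0) ->
     Pobj x D S L U lam eta mstar <= Pobj x D S L U lam eta m) ->
  (* alpha* is an optimal solution of the dual problem *)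
  vnonneg D S aDstar aSstar ->
  (forall aD aS, vnonneg D S aD aS ->
     Dobj x D S L U lam eta aD aS <= Dobj x D S L U lam eta aDstar aSstar) ->
  (* the sphere condition *)
  vnonneg D S qD qS -> 0 <= r ->
  vnorm2 D S (fun i j => aDstar i j - qD i j) (fun i j => aSstar i j - qS i j)
    <= r ^+ 2 ->
  Prune x D S qD r k <= lam ->
  mstar k = 0 /\ (forall k', desc k k' -> mstar k' = 0).
Proof.
move=> _ _ _ _ _ hx hdesc hU hUL heta hlam hm0 hopt ha0 hdopt hq0 hr hnorm hprune.
pose aDh := fun i l => 2 * pospart (L - mc x mstar i l).
pose aSh := fun i j => 2 * pospart (mc x mstar i j - U).
have hah : vnonneg D S aDh aSh.
  move=> i; split => l _; apply: mulr_ge0 => //; exact: pos_ge0.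
pose s := fun k => Calpha x D S aDh aSh k - lam.
pose w := fun k => (lam * eta)^-1 * pospart (s k).
pose G := \sum_(k < p) cgap lam eta (mstar k) (s k).
have hG0 : 0 <= G by apply: sumr_ge0 => k0 _; exact: cgap_ge0.
have pair0 : \sum_(i < n) (\sum_(l in D i) gapD L (mc x mstar i l) (aDh i l)
                + \sum_(j in S i) gapS U (mc x mstar i j) (aSh i j)) = 0.
  apply: big1 => i _; rewrite !big1 ?addr0 // => j _; [exact: gapS_eq0 | exact: gapD_eq0].
have HP : Pobj x D S L U lam eta mstar = Dobj x D S L U lam eta aDh aSh + G.
  by rewrite (identity _ _ _ _ _ _ _ _ aDh aSh) pair0 addr0.
pose Q := \sum_(i < n) (\sum_(l in D i) (mc x w i l - mc x mstar i l) ^+ 2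
                + \sum_(j in S i) (mc x w i j - mc x mstar i j) ^+ 2).
have hQ0 : 0 <= Q.
  by apply: sumr_ge0 => i _; apply: addr_ge0; apply: sumr_ge0 => j _; exact: sqr_ge0.
have key : forall t, 0 < t -> t <= 1 -> G <= t * Q.
  move=> t ht0 ht1.
  pose mt := fun k => mstar k + t * (w k - mstar k).
  have hmt : forall k0, 0 <= mt k0.
    move=> k0; rewrite /mt.
    have hw : 0 <= w k0 by apply: mulr_ge0; [rewrite invr_ge0 ltW // mulr_gt0 | exact: pos_ge0].
    have := hm0 k0; nra.
  have := hopt mt hmt.
  rewrite HP (identity _ _ _ _ _ _ _ _ aDh aSh).
  have hpairs : \sum_(i < n) (\sum_(l in D i) gapD L (mc x mt i l) (aDh i l)
                + \sum_(j in S i) gapS U (mc x mt i j) (aSh i j)) <= t ^+ 2 * Q.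
    rewrite /Q mulr_sumr; apply: ler_sum => i _; rewrite mulrDr !mulr_sumr.
    apply: lerD; apply: ler_sum => j _.
      apply: le_trans (gapD_le _ _ _) _; rewrite /mt mc_lin; apply: eqle; ring.
    apply: le_trans (gapS_le _ _ _) _; rewrite /mt mc_lin; apply: eqle; ring.
  have hcg : \sum_(k0 < p) cgap lam eta (mt k0) (Calpha x D S aDh aSh k0 - lam) <= (1 - t) * G.
    rewrite /G mulr_sumr; apply: ler_sum => k0 _.
    exact: cgap_conv (hm0 k0) (ltW ht0) ht1.
  move=> hP.
  have h : t * G <= t * (t * Q).
    have -> : t * (t * Q) = t ^+ 2 * Q by ring.
    lra.
  by rewrite ler_pM2l in h.
have G0 : G <= 0.
  case: (leP G 0) => // hG.
  have hd : 0 < G + Q + 1 by lra.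
  have ht1 : G / (G + Q + 1) <= 1 by rewrite ler_pdivrMr //; lra.
  have h := key _ (divr_gt0 hG hd) ht1.
  have : G / (G + Q + 1) * Q < G.
    rewrite mulrAC ltr_pdivrMr //; nra.
  lra.
have hPD : Pobj x D S L U lam eta mstar <= Dobj x D S L U lam eta aDstar aSstar.
  by rewrite HP; have := hdopt _ _ hah; lra.
rewrite (identity _ _ _ _ _ _ _ _ aDstar aSstar) in hPD.
have hp0 : 0 <= \sum_(i < n) (\sum_(l in D i) gapD L (mc x mstar i l) (aDstar i l)
                + \sum_(j in S i) gapS U (mc x mstar i j) (aSstar i j)).
  apply: sumr_ge0 => i _; case: (ha0 i) => h1 h2.
  apply: addr_ge0; apply: sumr_ge0 => j hj; [apply: gapD_ge0; exact: h1 | apply: gapS_ge0; exact: h2].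
have hcg : forall k0 : 'I_p, true ->
    0 <= cgap lam eta (mstar k0) (Calpha x D S aDstar aSstar k0 - lam).
  by move=> k0 _; exact: cgap_ge0.
have hGs0 := sumr_ge0 _ hcg.
have Gs0 : \sum_(k0 < p) cgap lam eta (mstar k0) (Calpha x D S aDstar aSstar k0 - lam) = 0.
  by apply/le_anti; rewrite hGs0 andbT; lra.
have each := psumr_eq0P hcg Gs0.
have fin : forall k', (forall i, x i k' <= x i k) -> mstar k' = 0.
  move=> k' hk'; apply: (cgap_zero hlam heta (hm0 k')); last exact: each.
  have := Calpha_le hx hk' ha0 hr hnorm; lra.
split; first by apply: fin => i; exact: lexx.
by move=> k' hd; apply: fin; exact: hdesc.
Qed.
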